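(* Let $A\subseteq\mathcal{R}$ be outer measurable and let $(J_n)_{n\ge1}$ be a sequence of pairwise disjoint intervals in $\mathcal{R}$ with $\lim_{n\to\infty}l(J_n)=0$. Then $A\cap\bigcup_{n=1}^\infty J_n$ is outer measurable, the series $\sum_{n=1}^\infty M_u(A\cap J_n)$ converges in $\mathcal{R}$, and $$M_u\Big(A\cap\bigcup_{n=1}^\infty J_n\Big)=\sum_{n=1}^\infty M_u(A\cap J_n).$$
   Context: $\mathcal{R}$ denotes the Levi-Civita field: functions $x:\mathbb{Q}\to\mathbb{R}$ with left-finite support, with componentwise addition and formal power series multiplication, ordered by $x>0$ iff $x\ne0$ and $x[\min\operatorname{supp}x]>0$; it is a non-Archimedean ordered field extension of $\mathbb{R}$, Cauchy complete in the order topology, in which all limits and series are taken (a series $\sum a_n$ converges iff $a_n\to0$). An interval is a set $[a,b],[a,b),(a,b]$ or $(a,b)$ with $a<b$ in $\mathcal{R}$, of length $l=b-a$. A cover of $A\subseteq\mathcal{R}$ is a sequence of intervals $(S_n)_{n\ge1}$ with $A\subseteq\bigcup_n S_n$ and $\sum_n l(S_n)$ convergent in $\mathcal{R}$. $A$ is called outer measurable if the infimum $\inf\{\sum_n l(S_n): (S_n)\text{ a cover of }A\}$ exists in $\mathcal{R}$; this infimum is then called the outer measure $M_u(A)$. (Intersections of an outer measurable set with an interval are outer measurable.) *)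

(* Defs.v *)
From HB Require Import structures.
From mathcomp Require Import all_boot all_order all_algebra.
From mathcomp Require Import boolp classical_sets cardinality reals.
Set Implicit Arguments. Unset Strict Implicit. Unset Printing Implicit Defensive.
Import Order.TTheory GRing.Theory Num.Theory.
Local Open Scope classical_set_scope.
Local Open Scope ring_scope.

Section LeviCivita.
Variable R : realType.

Definition left_finite (x : rat -> R) : Prop :=
  forall r : rat, finite_set [set q : rat | q < r /\ x q != 0].

Record LC := mkLC { lc_fun :> rat -> R; lc_lf : left_finite lc_fun }.

Lemma lf_zero : left_finite (fun _ => 0).
Proof.
move=> r; apply: (@sub_finite_set _ _ set0); last exact: finite_set0.
by move=> q [_ /eqP].
Qed.

Lemma lf_add (x y : LC) : left_finite (fun q => x q + y q).
Proof.
move=> r; apply: (@sub_finite_set _ _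
  ([set q : rat | q < r /\ x q != 0] `|` [set q : rat | q < r /\ y q != 0])).
  move=> q [qr]; have [x0|x0] := eqVneq (x q) 0.
    by rewrite x0 add0r => y0; right.
  by move=> _; left.
by rewrite finite_setU; split; apply: lc_lf.
Qed.

Lemma lf_opp (x : LC) : left_finite (fun q => - x q).
Proof.
move=> r; apply: (@sub_finite_set _ _ [set q : rat | q < r /\ x q != 0]).
  by move=> q [qr]; rewrite oppr_eq0.
exact: lc_lf.
Qed.

Definition lc_zero : LC := mkLC lf_zero.
Definition lc_add (x y : LC) : LC := mkLC (lf_add x y).
Definition lc_opp (x : LC) : LC := mkLC (lf_opp x).
Definition lc_sub (x y : LC) : LC := lc_add x (lc_opp y).

(** x > 0 iff x <> 0 and x[min supp x] > 0, i.e. there is q with x q > 0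
    and x p = 0 for all p < q (q is then min supp x). *)
Definition lc_pos (x : LC) : Prop :=
  exists q : rat, 0 < x q /\ forall p : rat, p < q -> x p = 0.

Definition lc_lt (x y : LC) : Prop := lc_pos (lc_sub y x).
Definition lc_le (x y : LC) : Prop := x = y \/ lc_lt x y.

Definition lc_cvg (u : nat -> LC) (l : LC) : Prop :=
  forall e : LC, lc_pos e -> exists N : nat, forall n : nat, (N <= n)%N ->
    lc_lt (lc_sub (u n) l) e /\ lc_lt (lc_sub l (u n)) e.

Fixpoint lc_psum (a : nat -> LC) (n : nat) : LC :=
  match n with
  | 0 => lc_zero
  | n'.+1 => lc_add (lc_psum a n') (a n')
  end.

Definition lc_series (a : nat -> LC) (s : LC) : Prop := lc_cvg (lc_psum a) s.

(** intervals [a,b], [a,b), (a,b], (a,b) with a < b; the booleans say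
    whether the left / right endpoint is included *)
Record lc_interval := mkInterval {
  ia : LC; ib : LC; ia_closed : bool; ib_closed : bool; iab : lc_lt ia ib }.

Definition in_interval (I : lc_interval) : set LC :=
  [set x | (lc_lt (ia I) x \/ (ia_closed I /\ x = ia I)) /\
           (lc_lt x (ib I) \/ (ib_closed I /\ x = ib I))].

Definition ilength (I : lc_interval) : LC := lc_sub (ib I) (ia I).

Definition cover_with_sum (A : set LC) (S : nat -> lc_interval) (s : LC) : Prop :=
  A `<=` \bigcup_n in_interval (S n) /\ lc_series (fun n => ilength (S n)) s.

Definition lc_is_inf (E : set LC) (m : LC) : Prop :=
  (forall s, E s -> lc_le m s) /\
  (forall m', (forall s, E s -> lc_le m' s) -> lc_le m' m).

Definition outer_measure (A : set LC) (m : LC) : Prop :=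
  lc_is_inf [set s | exists S, cover_with_sum A S s] m.

Definition outer_measurable (A : set LC) : Prop :=
  exists m, outer_measure A m.

End LeviCivita.

(* Main.v *)
Require Import Defs.
From HB Require Import structures.
From mathcomp Require Import all_boot all_order all_algebra.
From mathcomp Require Import boolp classical_sets cardinality functions reals.
Local Open Scope classical_set_scope.
Lemma bij_nat2 : exists (f : nat -> nat * nat) (g : nat * nat -> nat),
  cancel f g /\ cancel g f.
Proof.
have /card_set_bijP [h [_ hi hs]] := card_nat2.
have H : forall i : nat, exists x : nat * nat, h x = i.
  move=> i; have : [set: nat] i by [].
  by move/hs => [x _ <-]; exists x.
have [f Hf] := choice H.
exists f, h; split => [i|x]; first exact: Hf.
by apply: hi; rewrite ?inE // Hf.
Qed.

From mathcomp Require Import finmap.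
From mathcomp Require Import ring lra.
Set Implicit Arguments. Unset Strict Implicit. Unset Printing Implicit Defensive.
Import Order.TTheory GRing.Theory Num.Theory.
Local Open Scope classical_set_scope.
Local Open Scope ring_scope.

Section A.
Variable R : realType.
Lemma seq_min (s : seq rat) (u : rat) : u \in s -> exists m, m \in s /\ forall y, y \in s -> m <= y.
Proof.
elim: s u => [//|a s IH] u; rewrite inE => /orP [/eqP _|xs].
  case: (boolP (has (fun y => y < a) s)) => [/hasP [y ys ya]|].
    have [m [ms mm]] := IH y ys; exists m; split; first by rewrite inE ms orbT.
    move=> z; rewrite inE => /orP [/eqP ->|zs]; last exact: mm.
    by apply: ltW; apply: le_lt_trans (mm y ys) ya.
  move/hasPn=> H; exists a; split; first by rewrite inE eqxx.
  move=> z; rewrite inE => /orP [/eqP ->//|zs].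
  by have := H z zs; rewrite -leNgt.
have [m [ms mm]] := IH u xs.
case: (leP a m) => am.
  exists a; split; first by rewrite inE eqxx.
  move=> z; rewrite inE => /orP [/eqP ->//|zs]; exact: le_trans am (mm z zs).
exists m; split; first by rewrite inE ms orbT.
move=> z; rewrite inE => /orP [/eqP ->|zs]; [exact: ltW|exact: mm].
Qed.

Implicit Types (f g h : rat -> R) (x y z : LC R).

Definition Vq (q : rat) f := forall p, p < q -> f p = 0.
Definition fpos f := exists q, 0 < f q /\ forall p, p < q -> f p = 0.

Lemma lc_ext x y : (forall q, x q = y q) -> x = y.
Proof.
case: x => fx hx; case: y => fy hy /= H.
have E : fx = fy by apply/funext.
subst fy; congr mkLC; exact: Prop_irrelevance.
Qed.

Lemma lf_min f p0 : left_finite f -> f p0 != 0 ->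
  exists p, f p != 0 /\ forall r, r < p -> f r = 0.
Proof.
move=> lf fp0.
set S := [set q : rat | q < p0 + 1 /\ f q != 0].
have fS : finite_set S by apply: lf.
set X := fset_set S.
have p0X : p0 \in X.
  rewrite in_fset_set // ; apply/mem_set; split => //; by rewrite ltrDl.
have [m [mX mm]] := seq_min (p0X : p0 \in finmap.enum_fset X).
move: (mX : m \in X); rewrite in_fset_set // => /set_mem -[m1 m2].
exists m; split => // r rm; apply/eqP; rewrite -[_ == _]negbK; apply/negP => fr.
have rX : r \in finmap.enum_fset X.
  have: r \in X by rewrite in_fset_set //; apply/mem_set; split => //; exact: lt_trans rm m1.
  done.
by have := mm r rX; rewrite leNgt rm.
Qed.

Lemma fpos_ext f g : (forall q, f q = g q) -> fpos f -> fpos g.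
Proof. by move=> E [q [h1 h2]]; exists q; split; [rewrite -E|move=> p /h2; rewrite E]. Qed.

Lemma fpos_agree f g p : 0 < f p -> (forall r, r < p -> f r = 0) ->
  (forall r, r <= p -> g r = f r) -> fpos g.
Proof.
move=> h1 h2 E; exists p; split; first by rewrite E.
by move=> r rp; rewrite E ?ltW // h2.
Qed.

Lemma fpos_add f g : fpos f -> fpos g -> fpos (fun q => f q + g q).
Proof.
move=> [a [fa ha]] [b [gb hb]].
case: (ltgtP a b) => ab.
- exists a; split; first by rewrite (hb a ab) addr0.
  by move=> p pa; rewrite ha // hb ?addr0 //; exact: lt_trans pa ab.
- exists b; split; first by rewrite (ha b ab) add0r.
  by move=> p pb; rewrite hb // ha ?addr0 //; exact: lt_trans pb ab.
- subst b; exists a; split; first exact: addr_gt0.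
  by move=> p pa; rewrite ha ?hb // addr0.
Qed.

Lemma fpos_not f : fpos f -> fpos (fun q => - f q) -> False.
Proof.
move=> [a [fa ha]] [b [gb hb]].
case: (ltgtP a b) => ab.
- by move: (hb a ab) => /eqP; rewrite oppr_eq0 => /eqP E; rewrite E ltxx in fa.
- by move: (ha b ab) gb => ->; rewrite oppr0 ltxx.
- subst b; by move: gb; rewrite oppr_gt0 => /(lt_trans fa); rewrite ltxx.
Qed.

Lemma fpos_nz f : fpos f -> exists q, f q != 0.
Proof. by move=> [q [h _]]; exists q; rewrite gt_eqF. Qed.

Lemma fpos_tri f : left_finite f ->
  (forall q, f q = 0) \/ fpos f \/ fpos (fun q => - f q).
Proof.
move=> lf.
case: (pselect (exists q, f q != 0)) => [[q fq]|H]; last first.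
  left => q; apply/eqP; rewrite -[_ == _]negbK; apply/negP => fq; apply: H; by exists q.
right; have [p [fp hp]] := lf_min lf fq.
case: (ltgtP 0 (f p)) => s.
- by left; exists p.
- by right; exists p; split; [rewrite oppr_gt0|move=> r /hp ->; rewrite oppr0].
- by rewrite s eqxx in fp.
Qed.

Lemma ltE x y : lc_lt x y <-> fpos (fun q => y q - x q).
Proof. by []. Qed.

Lemma subE x y q : lc_sub x y q = x q - y q.
Proof. by []. Qed.
Lemma addE x y q : lc_add x y q = x q + y q.
Proof. by []. Qed.

Lemma lt_trans_lc x y z : lc_lt x y -> lc_lt y z -> lc_lt x z.
Proof.
move=> /ltE h1 /ltE h2; apply/ltE.
apply: fpos_ext (fpos_add h2 h1) => q; rewrite addrA subrK //.
Qed.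

Lemma lt_irr_lc x : ~ lc_lt x x.
Proof. by move=> /ltE [q [h _]]; move: h; rewrite subrr ltxx. Qed.

Lemma lt_asym_lc x y : lc_lt x y -> lc_lt y x -> False.
Proof.
move=> /ltE h1 /ltE h2; apply: (fpos_not h1); apply: fpos_ext h2 => q.
by rewrite opprB.
Qed.

Lemma lc_trichot x y : lc_lt x y \/ x = y \/ lc_lt y x.
Proof.
have := fpos_tri (lc_lf (lc_sub y x)); rewrite /= => -[H|[H|H]].
- right; left; apply: lc_ext => q; move: (H q) => /eqP; rewrite subr_eq0 => /eqP ->//.
- by left.
- right; right; apply/ltE; apply: fpos_ext H => q; by rewrite opprB.
Qed.

Lemma le_lt_trans_lc x y z : lc_le x y -> lc_lt y z -> lc_lt x z.
Proof. by case=> [->//|h1 h2]; exact: lt_trans_lc h1 h2. Qed.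
Lemma lt_le_trans_lc x y z : lc_lt x y -> lc_le y z -> lc_lt x z.
Proof. by move=> h1 [<-//|h2]; exact: lt_trans_lc h1 h2. Qed.
Lemma le_trans_lc x y z : lc_le x y -> lc_le y z -> lc_le x z.
Proof. by case=> [->//|h1] h2; right; exact: lt_le_trans_lc h1 h2. Qed.
Lemma le_refl_lc x : lc_le x x.
Proof. by left. Qed.
Lemma ltW_lc x y : lc_lt x y -> lc_le x y.
Proof. by right. Qed.
Lemma lt_nle_lc x y : lc_lt x y -> ~ lc_le y x.
Proof. by move=> h [E|h2]; [subst; exact: lt_irr_lc h|exact: lt_asym_lc h h2]. Qed.
Lemma nle_lt_lc x y : ~ lc_le x y -> lc_lt y x.
Proof.
move=> H; case: (lc_trichot x y) => [h|[h|h]] //; exfalso; apply: H; [by right|by left].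
Qed.
Lemma le_antisym_lc x y : lc_le x y -> lc_le y x -> x = y.
Proof. by case=> [//|h] h2; exfalso; exact: lt_nle_lc h h2. Qed.

Definition fnn f := (forall q, f q = 0) \/ fpos f.
Lemma leE x y : lc_le x y <-> fnn (fun q => y q - x q).
Proof.
split.
- case=> [->|h]; [by left => q; rewrite subrr|by right].
- case=> [H|h]; [left; apply: lc_ext => q; apply/eqP; rewrite eq_sym -subr_eq0 H //|by right].
Qed.

Lemma fnn_ext f g : (forall q, f q = g q) -> fnn f -> fnn g.
Proof. by move=> E [H|H]; [left => q; rewrite -E|right; exact: fpos_ext H]. Qed.

Lemma fnn_add f g : fnn f -> fnn g -> fnn (fun q => f q + g q).
Proof.
case=> [Hf|Hf] [Hg|Hg].
- by left => q; rewrite Hf Hg addr0.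
- by right; apply: fpos_ext Hg => q; rewrite Hf add0r.
- by right; apply: fpos_ext Hf => q; rewrite Hg addr0.
- by right; exact: fpos_add.
Qed.

Lemma fnn_fpos_add f g : fnn f -> fpos g -> fpos (fun q => f q + g q).
Proof.
case=> [Hf|Hf] Hg; last exact: fpos_add.
by apply: fpos_ext Hg => q; rewrite Hf add0r.
Qed.

Lemma fnn_not f : fnn f -> fpos (fun q => - f q) -> False.
Proof.
case=> [H|H] h; last exact: fpos_not H h.
by have [q] := fpos_nz h; rewrite H oppr0 eqxx.
Qed.

End A.


Section B.
Variable R : realType.
Implicit Types (f g h t : rat -> R) (x y z : LC R).

Definition fle (q : rat) f g := exists t, Vq q t /\ fnn (fun p => g p + t p - f p).

Lemma Vq0 q : Vq q (fun _ => (0 : R)).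
Proof. by []. Qed.
Lemma VqD q f g : Vq q f -> Vq q g -> Vq q (fun p => f p + g p).
Proof. by move=> hf hg p pq; rewrite hf ?hg ?addr0. Qed.
Lemma VqN q f : Vq q f -> Vq q (fun p => - f p).
Proof. by move=> hf p pq; rewrite hf ?oppr0. Qed.
Lemma VqB q f g : Vq q f -> Vq q g -> Vq q (fun p => f p - g p).
Proof. by move=> hf hg p pq; rewrite hf ?hg ?subrr. Qed.
Lemma Vq_mono q q' f : q' <= q -> Vq q f -> Vq q' f.
Proof. by move=> qq hf p pq; apply: hf; exact: lt_le_trans pq qq. Qed.
Lemma Vq_ext q f g : (forall p, f p = g p) -> Vq q f -> Vq q g.
Proof. by move=> E hf p pq; rewrite -E hf. Qed.

Lemma fnn0 : fnn (fun _ => (0:R)).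
Proof. by left. Qed.

Lemma fle_refl q f : fle q f f.
Proof. by exists (fun _ => 0); split => //; left => p; rewrite addr0 subrr. Qed.

Lemma fle_of_fnn q f g : fnn (fun p => g p - f p) -> fle q f g.
Proof. by move=> h; exists (fun _ => 0); split => //; apply: fnn_ext h => p; rewrite addr0. Qed.

Lemma fle_trans q f g h : fle q f g -> fle q g h -> fle q f h.
Proof.
move=> [t1 [v1 n1]] [t2 [v2 n2]]; exists (fun p => t1 p + t2 p); split; first exact: VqD.
apply: fnn_ext (fnn_add n1 n2) => p; rewrite /=; lra.
Qed.

Lemma fle_mono q q' f g : q' <= q -> fle q f g -> fle q' f g.
Proof. by move=> qq [t [v n]]; exists t; split => //; exact: Vq_mono v. Qed.

Lemma fle_addV q f g t : Vq q t -> fle q f g -> fle q f (fun p => g p + t p).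
Proof.
move=> vt [t1 [v1 n1]]; exists (fun p => t1 p - t p); split; first exact: VqB.
apply: fnn_ext n1 => p /=; lra.
Qed.
Lemma fle_addVl q f g t : Vq q t -> fle q (fun p => f p + t p) g -> fle q f g.
Proof.
move=> vt [t1 [v1 n1]]; exists (fun p => t1 p - t p); split; first exact: VqB.
apply: fnn_ext n1 => p /=; lra.
Qed.
Lemma fle_add q f g f' g' : fle q f g -> fle q f' g' ->
  fle q (fun p => f p + f' p) (fun p => g p + g' p).
Proof.
move=> [t1 [v1 n1]] [t2 [v2 n2]]; exists (fun p => t1 p + t2 p); split; first exact: VqD.
apply: fnn_ext (fnn_add n1 n2) => p; rewrite /=; lra.
Qed.
Lemma fle_ext q f g f' g' : (forall p, f p = f' p) -> (forall p, g p = g' p) ->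
  fle q f g -> fle q f' g'.
Proof.
move=> E1 E2 [t [v n]]; exists t; split => //; apply: fnn_ext n => p; by rewrite E1 E2.
Qed.

Lemma fle_neg q f g p : p < q -> g p - f p < 0 ->
  (forall r, r < p -> g r = f r) -> fle q f g -> False.
Proof.
move=> pq neg below [t [v n]]; apply: (fnn_not n).
exists p; split.
  by rewrite (v p pq) addr0 oppr_gt0.
by move=> r rp; rewrite (v r (lt_trans rp pq)) addr0 below // subrr oppr0.
Qed.

Lemma fle_all f g : left_finite (fun p => g p - f p) ->
  (forall q, fle q f g) -> fnn (fun p => g p - f p).
Proof.
move=> lf H; case: (fpos_tri lf) => [h|[h|h]]; [by left|by right|].
exfalso; case: h => p [h1 h2].
apply: (fle_neg (q := p + 1) (p := p) _ _ _ (H (p+1))).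
- by rewrite ltrDl.
- by rewrite -oppr_gt0.
- move=> r rp; have := h2 r rp; move/eqP; rewrite oppr_eq0 subr_eq0 => /eqP //.
Qed.

Lemma le_of_fle x y : (forall q, fle q x y) -> lc_le x y.
Proof.
move=> H; apply/leE; apply: fle_all => //.
exact: (lc_lf (lc_sub y x)).
Qed.

Lemma fle_of_le q x y : lc_le x y -> fle q x y.
Proof. by move/leE; exact: fle_of_fnn. Qed.

Lemma sandwich q f g : left_finite f ->
  fle q (fun _ => 0) f -> fle q f g -> Vq q g -> Vq q f.
Proof.
move=> lf h1 h2 vg p pq; apply/eqP; rewrite -[_ == _]negbK; apply/negP => fp.
have [p0 [f0 hb]] := lf_min lf fp.
have p0p : p0 <= p.
  rewrite leNgt; apply/negP => pp0; by rewrite hb ?eqxx in fp.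
have p0q : p0 < q by exact: le_lt_trans p0p pq.
case: (ltgtP 0 (f p0)) => s.
- apply: (fle_neg p0q _ _ h2).
    by rewrite vg // sub0r oppr_lt0.
  by move=> r rp; rewrite hb // vg //; exact: lt_trans rp p0q.
- apply: (fle_neg p0q _ _ h1); first by rewrite subr0.
  by move=> r rp; rewrite hb.
- by rewrite -s eqxx in f0.
Qed.

End B.


Section C.
Variable R : realType.
Implicit Types (f g h t : rat -> R) (x y z : LC R).

Definition epsf (q : rat) : rat -> R := fun p => if p == q then 1 else 0.
Lemma lf_eps q : left_finite (epsf q).
Proof.
move=> r; apply: (@sub_finite_set _ _ [set q]); last exact: finite_set1.
move=> p [_]; rewrite /epsf; case: (p =P q) => [E _|_]; [by rewrite E|by rewrite eqxx].
Qed.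
Definition lc_eps q : LC R := mkLC (lf_eps q).

Lemma Vq_eps q : Vq q (lc_eps q).
Proof. by move=> p pq; rewrite /= /epsf (lt_eqF pq). Qed.
Lemma pos_eps q : lc_pos (lc_eps q).
Proof.
exists q; split; first by rewrite /= /epsf eqxx.
by move=> p pq; rewrite /= /epsf (lt_eqF pq).
Qed.

Lemma fle_agree q f g : Vq q (fun p => f p - g p) -> fle q f g.
Proof.
move=> v; exists (fun p => f p - g p); split => //; left => p; lra.
Qed.

Lemma eq_or_nz (a b : R) : (a - b != 0 -> False) -> a = b.
Proof. by move=> H; apply/eqP; rewrite -subr_eq0; apply: contrapT => /negP. Qed.

Definition ccvg (u : nat -> LC R) (l : LC R) :=
  forall q, exists N, forall n, (N <= n)%N -> forall p, p < q -> u n p = l p.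

Lemma cvgP u l : lc_cvg u l <-> ccvg u l.
Proof.
split.
- move=> H q; have [N HN] := H _ (pos_eps q); exists N => n Nn.
  have [h1 h2] := HN n Nn.
  move: (fle_of_le q (ltW_lc h1)) (fle_of_le q (ltW_lc h2)) => f1 f2.
  move=> p pq; apply: eq_or_nz => d0.
  have [p0 [dp0 hb]] := lf_min (lc_lf (lc_sub (u n) l)) d0.
  have p0p : p0 <= p.
    rewrite leNgt; apply/negP => pp0; move/eqP: d0; apply; exact: (hb p pp0).
  have p0q : p0 < q by exact: le_lt_trans p0p pq.
  have e0 : lc_eps q p0 = 0 by rewrite /= /epsf (lt_eqF p0q).
  case: (ltgtP 0 ((lc_sub (u n) l) p0)) => s.
  + apply: (fle_neg p0q _ _ f1); first by rewrite e0 sub0r oppr_lt0.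
    by move=> r rp; rewrite hb // /= /epsf (lt_eqF (lt_trans rp p0q)).
  + apply: (fle_neg p0q _ _ f2).
      by rewrite e0 sub0r oppr_lt0 /= -opprB oppr_gt0.
    move=> r rp; rewrite /= /epsf (lt_eqF (lt_trans rp p0q)).
    by move: (hb r rp) => /= /eqP; rewrite subr_eq0 => /eqP ->; rewrite subrr.
  + by rewrite -s eqxx in dp0.
- move=> H e [pe [ep hb]]; have [N HN] := H (pe + 1); exists N => n Nn.
  have E r : r <= pe -> u n r = l r by move=> rp; apply: HN => //; apply: le_lt_trans rp _; by rewrite ltrDl.
  split; apply/ltE; apply: (fpos_agree ep hb) => r rp /=; rewrite E // subrr subr0 //.
Qed.

Lemma complete (u : nat -> LC R) :
  (forall q, exists N, forall n m, (N <= n)%N -> (N <= m)%N -> forall p, p < q -> u n p = u m p) ->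
  exists l, lc_cvg u l.
Proof.
move=> H; have [N HN] := choice H.
set lf := fun p => u (N (p + 1)) p.
have key r p : p < r -> lf p = u (N r) p.
  move=> pr; rewrite /lf (HN (p+1) _ (maxn (N (p+1)) (N r))) ?leq_maxl ?ltrDl //.
  by rewrite (HN r (maxn (N (p+1)) (N r)) (N r)) ?leq_maxr.
have lflf : left_finite lf.
  move=> r; apply: (@sub_finite_set _ _ [set p : rat | p < r /\ u (N r) p != 0]).
    by move=> p [pr]; rewrite (key r p pr) => h; split.
  exact: lc_lf.
exists (mkLC lflf); apply/cvgP => q; exists (N q) => n Nn p pq /=.
by rewrite (key q p pq) (HN q n (N q)).
Qed.

Lemma psumE (a : nat -> LC R) n p : lc_psum a n p = \sum_(0 <= i < n) a i p.
Proof.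
elim: n => [|n IH]; first by rewrite big_geq.
by rewrite big_nat_recr //= -IH.
Qed.

Lemma series_exists (a : nat -> LC R) :
  (forall q, exists N, forall n, (N <= n)%N -> Vq q (a n)) -> exists s, lc_series a s.
Proof.
move=> H; apply: complete => q; have [N HN] := H q; exists N.
have E n p : (N <= n)%N -> p < q -> lc_psum a n p = lc_psum a N p.
  move=> Nn pq; rewrite !psumE (big_cat_nat (leq0n N) Nn) /=.
  rewrite [X in _ + X]big1_seq ?addr0 // => i; rewrite mem_index_iota => /andP [_ /andP [Ni _]].
  exact: HN.
by move=> n m Nn Nm p pq; rewrite E ?(E m).
Qed.

Lemma series_terms (a : nat -> LC R) s : lc_series a s ->
  forall q, exists N, forall n, (N <= n)%N -> Vq q (a n).
Proof.
move/cvgP => H q; have [N HN] := H q; exists N => n Nn p pq.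
have := HN n.+1 (leqW Nn) p pq; rewrite -(HN n Nn p pq) /=.
by move/eqP; rewrite -subr_eq0 addrAC subrr add0r => /eqP.
Qed.

Lemma lim_le (u : nat -> LC R) l c N0 : lc_cvg u l ->
  (forall n, (N0 <= n)%N -> lc_le (u n) c) -> lc_le l c.
Proof.
move/cvgP => H Hc; apply: le_of_fle => q; have [N HN] := H q.
apply: (fle_trans (g := u (maxn N N0))).
  apply: fle_agree => p pq; rewrite HN ?leq_maxl // subrr //.
apply: fle_of_le; apply: Hc; exact: leq_maxr.
Qed.

Lemma lim_ge (u : nat -> LC R) l c N0 : lc_cvg u l ->
  (forall n, (N0 <= n)%N -> lc_le c (u n)) -> lc_le c l.
Proof.
move/cvgP => H Hc; apply: le_of_fle => q; have [N HN] := H q.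
apply: (fle_trans (g := u (maxn N N0))).
  apply: fle_of_le; apply: Hc; exact: leq_maxr.
apply: fle_agree => p pq; rewrite HN ?leq_maxl // subrr //.
Qed.

Lemma inf_approx (E : set (LC R)) m : lc_is_inf E m ->
  forall q, exists s, E s /\ Vq q (fun p => s p - m p).
Proof.
move=> [lb glb] q; apply: contrapT => H.
have lb2 : forall s, E s -> lc_le (lc_add m (lc_eps q)) s.
  move=> s Es; apply: contrapT => /nle_lt_lc hs; apply: H; exists s; split => //.
  apply: (sandwich (f := fun p => s p - m p) (g := lc_eps q)).
  - exact: (lc_lf (lc_sub s m)).
  - apply: fle_of_fnn; have /leE := lb s Es; apply: fnn_ext => p; by rewrite subr0.
  - apply: fle_of_fnn; have /ltW_lc /leE := hs; apply: fnn_ext => p /=; lra.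
  - exact: Vq_eps.
have := glb _ lb2; apply: lt_nle_lc; apply/ltE.
apply: fpos_ext (pos_eps q) => p /=; lra.
Qed.

Lemma inf_intro (E : set (LC R)) m : (forall s, E s -> lc_le m s) ->
  (forall q, exists s, E s /\ fle q s m) -> lc_is_inf E m.
Proof.
move=> lb ap; split => // m' lb'; apply: le_of_fle => q.
have [s [Es h]] := ap q; apply: fle_trans h; exact: fle_of_le (lb' s Es).
Qed.

End C.


Lemma bound_nat (F : nat -> nat) N : exists B, forall n, (n < N)%N -> (F n <= B)%N.
Proof.
elim: N => [|N [B HB]]; first by exists 0%N.
exists (maxn B (F N)) => n; rewrite ltnS leq_eqVlt => /orP [/eqP ->|nN].
  exact: leq_maxr.
exact: leq_trans (HB n nN) (leq_maxl _ _).
Qed.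

Section D.
Variable R : realType.
Implicit Types (f g h t : rat -> R) (x y z : LC R).

Lemma fnn_sum (I : Type) (r : seq I) (P : pred I) (F : I -> rat -> R) :
  (forall i, fnn (F i)) -> fnn (fun p => \sum_(i <- r | P i) F i p).
Proof.
move=> H; elim: r => [|i r IH].
  by left => p; rewrite big_nil.
case: (boolP (P i)) => Pi.
  apply: fnn_ext (fnn_add (H i) IH) => p; by rewrite big_cons Pi.
apply: fnn_ext IH => p; by rewrite big_cons (negbTE Pi).
Qed.

Lemma le0E x : lc_le (lc_zero R) x <-> fnn x.
Proof. by rewrite leE; split; apply: fnn_ext => p /=; rewrite subr0. Qed.

Lemma series_ge0 (a : nat -> LC R) s : (forall k, lc_le (lc_zero R) (a k)) ->
  lc_series a s -> lc_le (lc_zero R) s.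
Proof.
move=> H hs; apply: (lim_ge (N0 := 0%N) hs) => n _; apply/le0E.
have := fnn_sum (index_iota 0 n) xpredT (F := fun i => (a i : rat -> R)) (fun i => iffLR (le0E _) (H i)).
by apply: fnn_ext => p; rewrite psumE.
Qed.

Lemma term_le (a : nat -> LC R) s k : (forall k, lc_le (lc_zero R) (a k)) ->
  lc_series a s -> lc_le (a k) s.
Proof.
move=> H hs; apply: (lim_ge (N0 := k.+1) hs) => n kn; apply/leE.
have := fnn_sum (index_iota 0 n) (fun i => i != k) (F := fun i => (a i : rat -> R)) (fun i => iffLR (le0E _) (H i)).
apply: fnn_ext => p.
rewrite psumE (bigD1_seq k) ?iota_uniq //=; first by rewrite addrAC subrr add0r.
by rewrite mem_index_iota.
Qed.

Lemma concat (a : nat -> nat -> LC R) (s : nat -> LC R) (S : LC R)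
    (f : nat -> nat * nat) (g : nat * nat -> nat) :
  cancel f g -> cancel g f ->
  (forall n k, lc_le (lc_zero R) (a n k)) ->
  (forall n, lc_series (a n) (s n)) -> lc_series s S ->
  lc_series (fun i => a (f i).1 (f i).2) S.
Proof.
move=> fK gK a0 H1 H2; apply/cvgP => q.
have [N1 HN1] := (iffLR (cvgP _ _) H2) q.
have [N2 HN2] := series_terms H2 q.
set N := maxn N1 N2.
have Vrow n k : (N <= n)%N -> Vq q (a n k).
  move=> Nn; apply: (sandwich (g := s n)).
  - exact: lc_lf.
  - apply: fle_of_fnn; apply: fnn_ext (iffLR (le0E _) (a0 n k)) => p; by rewrite subr0.
  - apply: fle_of_le; exact: term_le.
  - apply: HN2; exact: leq_trans (leq_maxr _ _) Nn.
have HK : forall n, exists K, (forall m, (K <= m)%N -> forall p, p < q -> lc_psum (a n) m p = s n p)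
    /\ forall k, (K <= k)%N -> Vq q (a n k).
  move=> n; have [K1 HK1] := (iffLR (cvgP _ _) (H1 n)) q.
  have [K2 HK2] := series_terms (H1 n) q.
  exists (maxn K1 K2); split.
    move=> m Km; apply: HK1; exact: leq_trans (leq_maxl _ _) Km.
  move=> k Kk; apply: HK2; exact: leq_trans (leq_maxr _ _) Kk.
have [Kf HKf] := boolp.choice HK.
have [K HKb] := bound_nat Kf N.
have [I HI] : exists I, forall n k, (n < N)%N -> (k < K)%N -> (g (n, k) < I)%N.
  have [B HB] := bound_nat (fun n => \sum_(0 <= k < K) g (n, k)) N.
  exists B.+1 => n k nN kK; rewrite ltnS; apply: leq_trans (HB n nN).
  rewrite (bigD1_seq k) ?iota_uniq ?mem_index_iota //=; exact: leq_addr.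
exists I => i Ii p pq.
rewrite psumE.
set P := fun j => (((f j).1 < N) && ((f j).2 < K))%N.
rewrite (bigID P) /= [X in _ + X]big1 ?addr0; last first.
  move=> j; rewrite /P negb_and -!leqNgt => /orP [Nj|Kj].
    by rewrite Vrow.
  case: (ltnP (f j).1 N) => Nj; last by rewrite Vrow.
  have [_ ->] := HKf (f j).1 => //.
  exact: leq_trans (HKb _ Nj) Kj.
set L := [seq (n, k) | n <- index_iota 0 N, k <- index_iota 0 K].
have E1 : \sum_(0 <= j < i | P j) a (f j).1 (f j).2 p = \sum_(j <- map g L) a (f j).1 (f j).2 p.
  rewrite -big_filter; apply: perm_big; apply: uniq_perm.
  - exact/filter_uniq/iota_uniq.
  - rewrite map_inj_uniq; last exact: can_inj gK.
    apply: allpairs_uniq; [exact: iota_uniq|exact: iota_uniq|].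
    by move=> [x1 x2] [y1 y2] _ _ /= [-> ->].
  - move=> j; rewrite mem_filter mem_index_iota /=.
    apply/idP/idP.
      move=> /andP [/andP [Nj Kj] ji]; apply/mapP; exists (f j); last by rewrite fK.
      apply/allpairsP; exists ((f j).1, (f j).2) => /=; rewrite !mem_index_iota /=.
      by rewrite Nj Kj; case: (f j).
    move/mapP => [x /allpairsP [[n k] /= [nN kK ->]] ->].
    move: nN kK; rewrite !mem_index_iota /= => nN kK.
    rewrite /P gK /= nN kK /=; exact: leq_trans (HI n k nN kK) Ii.
rewrite E1 big_map big_allpairs /=.
rewrite -(HN1 N (leq_maxl _ _) p pq) psumE.
apply: eq_big_seq => n; rewrite mem_index_iota /= => nN.
have [HKf1 _] := HKf n.
under eq_bigr => k _ do rewrite gK /=.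
rewrite -psumE HKf1 //; exact: HKb.
Qed.

End D.


Section E.
Variable R : realType.
Implicit Types (f g h t : rat -> R) (x y z w : LC R).

Lemma nlt_le x y : ~ lc_lt x y -> lc_le y x.
Proof.
move=> H; case: (lc_trichot x y) => [//|[->|h]]; [exact: le_refl_lc|exact: ltW_lc].
Qed.

Definition lc_max x y := if pselect (lc_lt x y) then y else x.
Definition lc_min x y := if pselect (lc_lt x y) then x else y.

Lemma le_maxl x y : lc_le x (lc_max x y).
Proof. by rewrite /lc_max; case: pselect => h; [exact: ltW_lc|exact: le_refl_lc]. Qed.
Lemma le_maxr x y : lc_le y (lc_max x y).
Proof. by rewrite /lc_max; case: pselect => h; [exact: le_refl_lc|exact: nlt_le]. Qed.
Lemma max_le x y z : lc_le x z -> lc_le y z -> lc_le (lc_max x y) z.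
Proof. by rewrite /lc_max; case: pselect. Qed.
Lemma ge_minl x y : lc_le (lc_min x y) x.
Proof. by rewrite /lc_min; case: pselect => h; [exact: le_refl_lc|exact: nlt_le]. Qed.
Lemma ge_minr x y : lc_le (lc_min x y) y.
Proof. by rewrite /lc_min; case: pselect => h; [exact: ltW_lc|exact: le_refl_lc]. Qed.
Lemma le_min x y z : lc_le z x -> lc_le z y -> lc_le z (lc_min x y).
Proof. by rewrite /lc_min; case: pselect. Qed.

Lemma lt_addpos x y d : lc_le x y -> lc_pos d -> lc_lt x (lc_add y d).
Proof.
move=> /leE h1 h2; apply/ltE; apply: fpos_ext (fnn_fpos_add h1 h2) => p /=; lra.
Qed.

Lemma le_addpos x d : lc_pos d -> lc_le x (lc_add x d).
Proof. by move=> h; apply: ltW_lc; apply: lt_addpos (le_refl_lc _) h. Qed.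

Definition cI x y (h : lc_lt x y) : lc_interval R := @mkInterval R x y true true h.

Lemma in_int_le (I : lc_interval R) x : in_interval I x ->
  lc_le (ia I) x /\ lc_le x (ib I).
Proof.
case=> [[h1|[_ h1]] [h2|[_ h2]]]; split;
  by [right|left; rewrite h1|right|left; rewrite h2|left].
Qed.

Lemma in_cI x y (h : lc_lt x y) z : lc_le x z -> lc_le z y -> in_interval (cI h) z.
Proof.
move=> [E1|h1] [E2|h2]; split; by [right; split|left].
Qed.

Lemma int_mem (I : lc_interval R) x : lc_lt (ia I) x -> lc_lt x (ib I) -> in_interval I x.
Proof. by move=> h1 h2; split; left. Qed.

Lemma ilength_pos (I : lc_interval R) : lc_pos (ilength I).
Proof. exact: iab. Qed.

Lemma split_int (S J : lc_interval R) d : lc_pos d ->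
  exists Lf Md Rt : lc_interval R,
    (forall x, in_interval S x -> in_interval J x -> in_interval Md x) /\
    (forall x, in_interval S x -> ~ in_interval J x -> in_interval Lf x \/ in_interval Rt x) /\
    (forall p, ilength Lf p + ilength Md p + ilength Rt p = ilength S p + 3%:R * d p) /\
    lc_le (lc_zero R) (lc_sub (ilength Lf) d) /\ lc_le (lc_sub (ilength Lf) d) (ilength S) /\
    lc_le (lc_zero R) (lc_sub (ilength Md) d) /\ lc_le (lc_sub (ilength Md) d) (ilength S) /\
    lc_le (lc_zero R) (lc_sub (ilength Rt) d) /\ lc_le (lc_sub (ilength Rt) d) (ilength S).
Proof.
move=> dp.
set s1 := ia S; set s2 := ib S; set j1 := ia J; set j2 := ib J.
have s12 : lc_le s1 s2 := ltW_lc (iab S).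
have j12 : lc_le j1 j2 := ltW_lc (iab J).
set c1 := lc_min (lc_max j1 s1) s2; set c2 := lc_min (lc_max j2 s1) s2.
have sc1 : lc_le s1 c1 by apply: le_min => //; exact: le_maxr.
have c1s : lc_le c1 s2 by exact: ge_minr.
have sc2 : lc_le s1 c2 by apply: le_min => //; exact: le_maxr.
have c2s : lc_le c2 s2 by exact: ge_minr.
have c12 : lc_le c1 c2.
  apply: le_min => //; apply: le_trans_lc (ge_minl _ _) _.
  apply: max_le; [exact: le_trans_lc j12 (le_maxl _ _)|exact: le_maxr].
have h1 : lc_lt s1 (lc_add c1 d) by exact: lt_addpos.
have h2 : lc_lt c1 (lc_add c2 d) by exact: lt_addpos.
have h3 : lc_lt c2 (lc_add s2 d) by exact: lt_addpos.
exists (cI h1), (cI h2), (cI h3).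
have leB x y : lc_le x y -> lc_le (lc_zero R) (lc_sub y x).
  by move/leE => h; apply/leE; apply: fnn_ext h => p /=; rewrite subr0.
have leS x y z w : lc_le x y -> lc_le y z -> lc_le z w -> lc_le (lc_sub z y) (lc_sub w x).
  move=> /leE a1 /leE a2 /leE a3; apply/leE; apply: fnn_ext (fnn_add a1 a3) => p /=; lra.
split.
  move=> x xS xJ; have [xs1 xs2] := in_int_le xS; have [xj1 xj2] := in_int_le xJ.
  apply: in_cI.
    apply: le_trans_lc (ge_minl _ _) _; exact: max_le.
  apply: le_trans_lc (le_addpos _ dp); apply: le_min => //.
  exact: le_trans_lc xj2 (le_maxl _ _).
split.
  move=> x xS xJ; have [xs1 xs2] := in_int_le xS.
  case: (pselect (lc_lt j1 x)) => a1; last first.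
    left; apply: in_cI => //; apply: le_trans_lc (le_addpos _ dp); apply: le_min => //.
    exact: le_trans_lc (nlt_le a1) (le_maxl _ _).
  case: (pselect (lc_lt x j2)) => a2.
    by exfalso; apply: xJ; apply: int_mem.
  right; apply: in_cI; last exact: le_trans_lc xs2 (le_addpos _ dp).
  apply: le_trans_lc (ge_minl _ _) _; apply: max_le => //; exact: nlt_le.
split; first by move=> p /=; lra.
have E1 u v (hh : lc_lt u (lc_add v d)) : lc_sub (ilength (cI hh)) d = lc_sub v u.
  by apply: lc_ext => p /=; lra.
split; first by rewrite E1; exact: leB.
split; first by rewrite E1; exact: leS (le_refl_lc _) sc1 c1s.
split; first by rewrite E1; exact: leB.
split; first by rewrite E1; exact: leS sc1 c12 c2s.
split; first by rewrite E1; exact: leB.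
by rewrite E1; exact: leS sc2 c2s (le_refl_lc _).
Qed.

End E.


Lemma exists_nat (x : rat) : exists n : nat, x <= n%:R.
Proof.
case: (lerP x 0) => hx; first by exists 0%N.
exists (Num.Def.archi_bound x); apply: ltW; apply: archi_boundP; exact: ltW.
Qed.

Section F.
Variable R : realType.
Implicit Types (f g h t : rat -> R) (x y z w : LC R).

Lemma lim_V (u : nat -> LC R) l c r N0 : lc_cvg u l ->
  (forall n, (N0 <= n)%N -> Vq r (fun p => u n p - c p)) -> Vq r (fun p => l p - c p).
Proof.
move/cvgP => H Hc p pr; have [N HN] := H r.
rewrite -(HN (maxn N N0) (leq_maxl _ _) p pr); apply: Hc => //; exact: leq_maxr.
Qed.

Lemma series_V (a : nat -> LC R) s r : (forall k, Vq r (a k)) -> lc_series a s -> Vq r s.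
Proof.
move=> H hs; have := lim_V (c := lc_zero R) (N0 := 0%N) hs.
move=> /(_ r) h; apply: Vq_ext (h _) => [p|n _]; first by rewrite /= subr0.
move=> p pr; rewrite /= subr0 psumE big1_seq // => i _; exact: H.
Qed.

Lemma series_ext (a b : nat -> LC R) s : (forall k p, a k p = b k p) ->
  lc_series a s -> lc_series b s.
Proof.
move=> E /cvgP H; apply/cvgP => q; have [N HN] := H q; exists N => n Nn p pq.
rewrite -(HN n Nn p pq) !psumE; apply: eq_bigr => i _; by rewrite E.
Qed.

Lemma series_add (a b c : nat -> LC R) x y : lc_series a x -> lc_series b y ->
  (forall k p, c k p = a k p + b k p) -> lc_series c (lc_add x y).
Proof.
move=> /cvgP H1 /cvgP H2 E; apply/cvgP => q.
have [N1 HN1] := H1 q; have [N2 HN2] := H2 q; exists (maxn N1 N2) => n Nn p pq.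
rewrite /= -(HN1 n _ p pq) ?(leq_trans (leq_maxl _ _) Nn) //.
rewrite -(HN2 n _ p pq) ?(leq_trans (leq_maxr _ _) Nn) //.
rewrite !psumE -big_split /=; apply: eq_bigr => i _; exact: E.
Qed.

Lemma series_uniq (a : nat -> LC R) x y : lc_series a x -> lc_series a y -> x = y.
Proof.
move=> /cvgP H1 /cvgP H2; apply: lc_ext => p.
have [N1 HN1] := H1 (p+1); have [N2 HN2] := H2 (p+1).
have pp : p < p + 1 by rewrite ltrDl.
by rewrite -(HN1 (maxn N1 N2) (leq_maxl _ _) p pp) (HN2 (maxn N1 N2) (leq_maxr _ _) p pp).
Qed.

Lemma eps_series r : exists s, lc_series (fun k => lc_eps R (r + k%:R)) s /\ Vq r s.
Proof.
have [s hs] : exists s, lc_series (fun k => lc_eps R (r + k%:R)) s.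
  apply: series_exists => q; have [N HN] := exists_nat (q - r); exists N => n Nn.
  apply: Vq_mono; last exact: Vq_eps. rewrite -lerBlDl; apply: le_trans HN _; by rewrite ler_nat.
exists s; split => //; apply: series_V hs => k; apply: Vq_mono; last exact: Vq_eps.
by rewrite lerDl.
Qed.

Lemma eps_lt0 r : lc_lt (lc_zero R) (lc_eps R r).
Proof. by apply/ltE; apply: fpos_ext (pos_eps R r) => p /=; rewrite subr0. Qed.

Definition dI r : lc_interval R := cI (eps_lt0 r).

Lemma cover_merge (X Y : set (LC R)) (P Q : nat -> lc_interval R) s1 s2 q :
  cover_with_sum X P s1 -> cover_with_sum Y Q s2 ->
  exists T tau, cover_with_sum (X `|` Y) T tau /\ Vq q (fun p => tau p - (s1 p + s2 p)).
Proof.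
move=> [XP hP] [YQ hQ].
have [fb [gb [fK gK]]] := bij_nat2.
have HD : forall n : nat, exists d, lc_series (fun k => lc_eps R ((q + n%:R) + k%:R)) d /\ Vq (q + n%:R) d.
  move=> n; exact: eps_series.
have [d Hd] := boolp.choice HD.
set row := fun n k => if n == 0%N then P k else if n == 1%N then Q k else dI ((q + n%:R) + k%:R).
set s := fun n => if n == 0%N then s1 else if n == 1%N then s2 else d n.
have Hrow : forall n, lc_series (fun k => ilength (row n k)) (s n).
  move=> n; rewrite /row /s; case: eqP => // _; case: eqP => // _.
  have [h _] := Hd n; apply: series_ext h => k p /=; by rewrite subr0.
have [S hS] : exists S, lc_series s S.
  apply: series_exists => r; have [N HN] := exists_nat (r - q); exists N.+2 => n Nn.
  rewrite /s; case: eqP => [E|_]; first by rewrite E in Nn.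
  case: eqP => [E|_]; first by rewrite E in Nn.
  have [_ h] := Hd n; apply: Vq_mono h; rewrite -lerBlDl; apply: le_trans HN _.
  rewrite ler_nat; exact: leq_trans (leqnSn _) (leq_trans (leqnSn _) Nn).
exists (fun i => row (fb i).1 (fb i).2), S; split; [split|].
- move=> x [xX|xY].
    have [k _ hk] := XP x xX; exists (gb (0%N, k)) => //; by rewrite gK.
  have [k _ hk] := YQ x xY; exists (gb (1%N, k)) => //; by rewrite gK.
- apply: (concat (a := fun n k => ilength (row n k))) fK gK _ Hrow hS.
  by move=> n k; apply: ltW_lc; apply/ltE; apply: fpos_ext (iab (row n k)) => p /=; rewrite subr0.
- apply: (lim_V (N0 := 2%N) hS) => n n2 p pq.
  rewrite psumE (big_cat_nat (n := 2%N)) //= big_nat_recr // big_nat1 /s /=.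
  rewrite big1_seq ?addr0 ?subrr // => i; rewrite mem_index_iota => /andP [_ /andP [i2 _]].
  case: eqP => [E|_]; first by rewrite E in i2.
  case: eqP => [E|_]; first by rewrite E in i2.
  have [_ h] := Hd i; apply: h; apply: lt_le_trans pq _; by rewrite lerDl.
Qed.

End F.


Section G.
Variable R : realType.
Implicit Types (f g h t : rat -> R) (x y z w : LC R).

Lemma cover_sub (A A' : set (LC R)) S s : A' `<=` A -> cover_with_sum A S s -> cover_with_sum A' S s.
Proof. by move=> sub [h1 h2]; split => //; exact: subset_trans h1. Qed.

Lemma piece_series (S : nat -> lc_interval R) s (a : nat -> LC R) q :
  lc_series (fun k => ilength (S k)) s ->
  (forall k, lc_le (lc_zero R) (lc_sub (a k) (lc_eps R (q + k%:R))) /\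
             lc_le (lc_sub (a k) (lc_eps R (q + k%:R))) (ilength (S k))) ->
  exists sa, lc_series a sa.
Proof.
move=> hs H; apply: series_exists => r.
have [N1 HN1] := series_terms hs r; have [N2 HN2] := exists_nat (r - q).
exists (maxn N1 N2) => k Nk.
have V1 : Vq r (lc_sub (a k) (lc_eps R (q + k%:R))).
  have [h1 h2] := H k; apply: (sandwich (g := ilength (S k))).
  - exact: lc_lf.
  - apply: fle_of_fnn; apply: fnn_ext (iffLR (le0E _) h1) => p; by rewrite subr0.
  - exact: fle_of_le.
  - apply: HN1; exact: leq_trans (leq_maxl _ _) Nk.
have V2 : Vq r (lc_eps R (q + k%:R)).
  apply: Vq_mono; last exact: Vq_eps.
  rewrite -lerBlDl; apply: le_trans HN2 _; rewrite ler_nat; exact: leq_trans (leq_maxr _ _) Nk.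
apply: Vq_ext (VqD V1 V2) => p /=; lra.
Qed.

Lemma split_cover (B : set (LC R)) (S : nat -> lc_interval R) s (J : lc_interval R) q :
  cover_with_sum B S s ->
  exists P sP Q sQ, cover_with_sum (B `&` in_interval J) P sP /\
    cover_with_sum (B `\` in_interval J) Q sQ /\ fle q (fun p => sP p + sQ p) s.
Proof.
move=> [BS hs].
set del := fun k : nat => lc_eps R (q + k%:R).
have Hs : forall k, exists tr : lc_interval R * lc_interval R * lc_interval R,
    (forall x, in_interval (S k) x -> in_interval J x -> in_interval tr.1.2 x) /\
    (forall x, in_interval (S k) x -> ~ in_interval J x -> in_interval tr.1.1 x \/ in_interval tr.2 x) /\
    (forall p, ilength tr.1.1 p + ilength tr.1.2 p + ilength tr.2 p = ilength (S k) p + 3%:R * del k p) /\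
    lc_le (lc_zero R) (lc_sub (ilength tr.1.1) (del k)) /\ lc_le (lc_sub (ilength tr.1.1) (del k)) (ilength (S k)) /\
    lc_le (lc_zero R) (lc_sub (ilength tr.1.2) (del k)) /\ lc_le (lc_sub (ilength tr.1.2) (del k)) (ilength (S k)) /\
    lc_le (lc_zero R) (lc_sub (ilength tr.2) (del k)) /\ lc_le (lc_sub (ilength tr.2) (del k)) (ilength (S k)).
  move=> k; have [Lf [Md [Rt H]]] := split_int (S k) J (pos_eps R (q + k%:R)).
  by exists (Lf, Md, Rt).
have [tr Htr] := boolp.choice Hs.
set L := fun k => (tr k).1.1; set M := fun k => (tr k).1.2; set Rr := fun k => (tr k).2.
have [sL hL] : exists sL, lc_series (fun k => ilength (L k)) sL.
  apply: (piece_series (q := q) hs) => k; have [_ [_ [_ [h1 [h2 _]]]]] := Htr k; by split.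
have [sM hM] : exists sM, lc_series (fun k => ilength (M k)) sM.
  apply: (piece_series (q := q) hs) => k; have [_ [_ [_ [_ [_ [h1 [h2 _]]]]]]] := Htr k; by split.
have [sR hR] : exists sR, lc_series (fun k => ilength (Rr k)) sR.
  apply: (piece_series (q := q) hs) => k; have [_ [_ [_ [_ [_ [_ [_ [h1 h2]]]]]]]] := Htr k; by split.
have [Dd [hD vD]] := eps_series R q.
have E1 := series_add (c := fun k => lc_add (ilength (L k)) (ilength (M k))) hL hM (fun k p => erefl).
have E2 := series_add (c := fun k => lc_add (lc_add (ilength (L k)) (ilength (M k))) (ilength (Rr k))) E1 hR (fun k p => erefl).
have E3 := series_add (c := fun k => lc_add (del k) (del k)) hD hD (fun k p => erefl).
have E4 := series_add (c := fun k => lc_add (lc_add (del k) (del k)) (del k)) E3 hD (fun k p => erefl).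
have E5 := series_add (c := fun k => lc_add (ilength (S k)) (lc_add (lc_add (del k) (del k)) (del k))) hs E4 (fun k p => erefl).
have E6 : lc_series (fun k => lc_add (ilength (S k)) (lc_add (lc_add (del k) (del k)) (del k)))
             (lc_add (lc_add sL sM) sR).
  apply: series_ext E2 => k p; have [_ [_ [h _]]] := Htr k; rewrite /= h /=; lra.
have Eq := series_uniq E5 E6.
have [T [tau [hT vT]]] := cover_merge q (conj (fun x (h : (\bigcup_k in_interval (L k)) x) => h) hL)
                                  (conj (fun x (h : (\bigcup_k in_interval (Rr k)) x) => h) hR).
exists M, sM, T, tau; split; [split => //|split].
- move=> x [xB xJ]; have [k _ xk] := BS x xB; exists k => //.
  have [h _] := Htr k; exact: h.
- apply: cover_sub hT => x [xB xJ]; have [k _ xk] := BS x xB.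
  have [_ [h _]] := Htr k; case: (h x xk xJ) => hh; [left|right]; by exists k.
- apply: fle_agree => p pq; have := congr1 (fun z : LC R => z p) Eq => /= Ep.
  have := vT p pq; have := vD p pq; move=> a1 a2; lra.
Qed.

End G.


Section H.
Variable R : realType.
Implicit Types (f g h t : rat -> R) (x y z w : LC R).

Lemma fle_cancel q f g h : fle q (fun p => f p + h p) (fun p => g p + h p) -> fle q f g.
Proof. by move=> [t [v n]]; exists t; split => //; apply: fnn_ext n => p; lra. Qed.

Lemma fle_both q f g : left_finite (fun p => f p - g p) -> fle q f g -> fle q g f ->
  Vq q (fun p => f p - g p).
Proof.
move=> lf h1 h2 p pq; apply/eqP; rewrite -[_ == _]negbK; apply/negP => fp.
have [p0 [f0 hb]] := lf_min lf fp.
have p0p : p0 <= p.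
  rewrite leNgt; apply/negP => pp0; by rewrite hb ?eqxx in fp.
have p0q : p0 < q by exact: le_lt_trans p0p pq.
have hb' r : r < p0 -> g r = f r.
  move=> rp; have := hb r rp; move/eqP; rewrite subr_eq0 => /eqP //.
case: (ltgtP 0 (f p0 - g p0)) => s.
- apply: (fle_neg p0q _ hb' h1); lra.
- apply: (fle_neg p0q _ (fun r rp => esym (hb' r rp)) h2); lra.
- by rewrite -s eqxx in f0.
Qed.

Definition csums (B : set (LC R)) := [set s | exists S, cover_with_sum B S s].

Lemma cover_ge0 (B : set (LC R)) S s : cover_with_sum B S s -> lc_le (lc_zero R) s.
Proof.
move=> [_ h]; apply: series_ge0 h => k; apply: ltW_lc; apply/ltE.
apply: fpos_ext (iab (S k)) => p /=; rewrite subr0 //.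
Qed.

Lemma om_ge0 (B : set (LC R)) m : outer_measure B m -> lc_le (lc_zero R) m.
Proof. by move=> [_ glb]; apply: glb => s [S hS]; exact: cover_ge0 hS. Qed.

Lemma int_measurable (B : set (LC R)) (J : lc_interval R) M :
  outer_measure B M -> exists m, outer_measure (B `&` in_interval J) m.
Proof.
move=> hM.
have key : forall P sP Q sQ, cover_with_sum (B `&` in_interval J) P sP ->
    cover_with_sum (B `\` in_interval J) Q sQ -> lc_le M (lc_add sP sQ).
  move=> P sP Q sQ hP hQ; apply: le_of_fle => r.
  have [T [tau [hT vT]]] := cover_merge r hP hQ.
  apply: (fle_trans (g := tau)); last by apply: fle_agree => p pr; rewrite /= vT.
  apply: fle_of_le; case: hM => lb _; apply: lb; exists T.
  apply: cover_sub hT => x xB; case: (pselect (in_interval J x)) => xJ; [left|right]; by split.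
have Hj : forall j : nat, exists sT : LC R * LC R,
    csums (B `&` in_interval J) sT.1 /\ csums (B `\` in_interval J) sT.2 /\
    fle j%:R (fun p => sT.1 p + sT.2 p) M.
  move=> j; have [s [[S hS] vs]] := inf_approx hM j%:R.
  have [P [sP [Q [sQ [hP [hQ hf]]]]]] := split_cover J j%:R hS.
  exists (sP, sQ); split; first by exists P.
  split; first by exists Q.
  apply: fle_trans hf _; exact: fle_agree.
have [sT HsT] := boolp.choice Hj.
set sig := fun j => (sT j).1.
have lowb : forall j s, csums (B `&` in_interval J) s -> fle j%:R (sig j) s.
  move=> j s [P hP]; have [_ [[Q hQ] hf]] := HsT j.
  apply: (fle_cancel (h := (sT j).2)); apply: fle_trans hf _.
  have := key _ _ _ _ hP hQ; exact: fle_of_le.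
have cauchy : forall q, exists N, forall n m, (N <= n)%N -> (N <= m)%N ->
    forall p, p < q -> sig n p = sig m p.
  move=> q; have [N HN] := exists_nat q; exists N => n m Nn Nm p pq.
  have V : Vq q (fun p => sig n p - sig m p).
    apply: fle_both; first exact: (lc_lf (lc_sub (sig n) (sig m))).
      apply: (fle_mono (q := n%:R)); first by apply: le_trans HN _; rewrite ler_nat.
      apply: lowb; have [h _] := HsT m; exact: h.
    apply: (fle_mono (q := m%:R)); first by apply: le_trans HN _; rewrite ler_nat.
    apply: lowb; have [h _] := HsT n; exact: h.
  by apply/eqP; rewrite -subr_eq0; apply/eqP; apply: V.
have [l hl] := complete cauchy.
exists l; apply: inf_intro.
- move=> s hs; apply: le_of_fle => r.
  have [N HN] := (iffLR (cvgP _ _) hl) r; have [N2 HN2] := exists_nat r.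
  apply: (fle_trans (g := sig (maxn N N2))).
    by apply: fle_agree => p pr; rewrite HN ?leq_maxl // subrr.
  apply: (fle_mono (q := (maxn N N2)%:R)); last exact: lowb.
  apply: le_trans HN2 _; rewrite ler_nat; exact: leq_maxr.
- move=> r; have [N HN] := (iffLR (cvgP _ _) hl) r.
  exists (sig N); split; first by have [h _] := HsT N; exact: h.
  by apply: fle_agree => p pr; rewrite HN // subrr.
Qed.

End H.


Section Main.
Variable R : realType.
Implicit Types (f g h t : rat -> R) (x y z w : LC R).

Lemma single_cover (I : lc_interval R) r : exists S s,
  cover_with_sum (in_interval I) S s /\ Vq r (fun p => s p - ilength I p).
Proof.
set P := fun k : nat => if k == 0%N then I else dI R (r + k%:R).
have [s hs] : exists s, lc_series (fun k => ilength (P k)) s.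
  apply: series_exists => q; have [N HN] := exists_nat (q - r); exists N.+1 => n Nn.
  rewrite /P; case: eqP => [E|_]; first by rewrite E in Nn.
  move=> p pq; rewrite /= subr0; apply: Vq_eps; apply: lt_le_trans pq _.
  rewrite -lerBlDl; apply: le_trans HN _; rewrite ler_nat; exact: ltnW.
exists P, s; split; first split => //.
  by move=> x xI; exists 0%N.
apply: (lim_V (N0 := 1%N) hs) => n n1 p pr.
rewrite psumE (big_cat_nat (n := 1%N)) //= big_nat1 /P /= big1_seq ?addr0 ?subrr //.
move=> i; rewrite mem_index_iota => /andP [_ /andP [i1 _]].
case: eqP => [E|_]; first by rewrite E in i1.
rewrite /= subr0; apply: Vq_eps; apply: lt_le_trans pr _; by rewrite lerDl.
Qed.

End Main.

Theorem mainTheorem5 (R : realType) (A : set (LC R)) (J : nat -> lc_interval R) :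
  outer_measurable A ->
  (forall i j : nat, i <> j -> in_interval (J i) `&` in_interval (J j) = set0) ->
  lc_cvg (fun n => ilength (J n)) (lc_zero R) ->
  exists M : LC R,
    outer_measure (A `&` \bigcup_n in_interval (J n)) M /\
    exists m : nat -> LC R,
      (forall n, outer_measure (A `&` in_interval (J n)) (m n)) /\
      lc_series m M.
Proof.
move=> [M hM] disj hJ.
have [m hm] := boolp.choice (fun n => int_measurable (J n) hM).
have mto0 : forall r, exists N, forall n, (N <= n)%N -> Vq r (m n).
  move=> r; have [N HN] := (iffLR (cvgP _ _) hJ) r; exists N => n Nn.
  have [S [s [hS vs]]] := single_cover (J n) r.
  apply: (sandwich (g := ilength (J n))).
  - exact: lc_lf.
  - apply: fle_of_fnn; apply: fnn_ext (iffLR (le0E _) (om_ge0 (hm n))) => p; by rewrite subr0.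
  - apply: (fle_trans (g := s)); last exact: fle_agree.
    apply: fle_of_le; have [lb _] := hm n; apply: lb; exists S.
    by apply: cover_sub hS => x [].
  - by move=> p pr; rewrite (HN n Nn p pr).
have [Ms hMs] := series_exists mto0.
exists Ms; split; last by exists m.
apply: inf_intro.
- move=> s [C hC]; apply: le_of_fle => r.
  set UN := fun N : nat => [set x | exists n, (N <= n)%N /\ in_interval (J n) x].
  have claim : forall N, exists SN sN, cover_with_sum (A `&` UN N) SN sN /\
      fle r (fun p => lc_psum m N p + sN p) s.
    elim=> [|N [SN [sN [hN fN]]]].
      exists C, s; split.
        apply: cover_sub hC => x [xA [n [_ xn]]]; split => //; by exists n.
      by apply: fle_agree => p _ /=; rewrite add0r subrr.
    have [P [sP [Q [sQ [hP [hQ hf]]]]]] := split_cover (J N) r hN.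
    exists Q, sQ; split.
      apply: cover_sub hQ => x [xA [n [Nn xn]]]; split.
        split => //; exists n; split => //; exact: ltnW.
      move=> xN; have : (in_interval (J n) `&` in_interval (J N)) x by [].
      rewrite disj; first by [].
      by move=> E; rewrite E ltnn in Nn.
    have mP : lc_le (m N) sP.
      have [lb _] := hm N; apply: lb; exists P; apply: cover_sub hP => x [xA xN].
      split => //; split => //; by exists N.
    apply: fle_trans fN.
    apply: (fle_trans (g := fun p => lc_psum m N p + (sP p + sQ p))).
      apply: fle_of_fnn; have /leE := mP; apply: fnn_ext => p /=; lra.
    exact: fle_add (fle_refl _ _) hf.
  have [N0 HN0] := (iffLR (cvgP _ _) hMs) r.
  have [SN [sN [hN fN]]] := claim N0.
  apply: (fle_trans (g := lc_psum m N0)).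
    by apply: fle_agree => p pr; rewrite -(HN0 N0 (leqnn _) p pr) subrr.
  apply: fle_trans fN; apply: fle_of_fnn.
  have := iffLR (le0E _) (cover_ge0 hN); apply: fnn_ext => p /=; lra.
- move=> r.
  have Hc : forall n, exists Sc : ((nat -> lc_interval R) * LC R)%type,
      cover_with_sum (A `&` in_interval (J n)) Sc.1 Sc.2 /\
      Vq (r + n%:R) (fun p => Sc.2 p - m n p).
    move=> n; have [s [[S hS] vs]] := inf_approx (hm n) (r + n%:R); by exists (S, s).
  have [Sc HSc] := boolp.choice Hc.
  have [W hW] : exists W, lc_series (fun n => lc_sub (Sc n).2 (m n)) W.
    apply: series_exists => q; have [N HN] := exists_nat (q - r); exists N => n Nn.
    have [_ v] := HSc n; apply: Vq_mono v; rewrite -lerBlDl; apply: le_trans HN _.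
    by rewrite ler_nat.
  have vW : Vq r W.
    apply: series_V hW => n; have [_ v] := HSc n; apply: Vq_mono v; by rewrite lerDl.
  have hc : lc_series (fun n => (Sc n).2) (lc_add Ms W).
    apply: series_add hMs hW _ => k p /=; lra.
  have [fb [gb [fK gK]]] := bij_nat2.
  have a0 : forall n k, lc_le (lc_zero R) (ilength ((Sc n).1 k)).
    move=> n k; apply: ltW_lc; apply/ltE.
    apply: fpos_ext (iab ((Sc n).1 k)) => p /=; rewrite subr0 //.
  have hT := concat (a := fun n k => ilength ((Sc n).1 k)) fK gK a0 (fun n => (HSc n).1.2) hc.
  exists (lc_add Ms W); split; last by apply: fle_agree => p pr /=; rewrite vW //; lra.
  exists (fun i => (Sc (fb i).1).1 (fb i).2); split => //.
  move=> x [xA [n _ xn]]; have [[cov _] _] := HSc n; have [k _ xk] := cov x (conj xA xn).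
  by exists (gb (n, k)) => //; rewrite gK.
Qed.
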